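(* Fix $d\ge 1$. There is a constant $c_d$ depending only on $d$ such that for every 2-dimensional binary matrix $X$ and every partition $\{x_i\}$ of $X$ into sub-matrices of size at most $d\times d$, $$\big|BDM_{\{x_i\}}(X)-H_{\{x_i\}}(X)\big|\le c_d\log(|\{x_i\}|),$$ that is, $|BDM_{\{x_i\}}(X)-H_{\{x_i\}}(X)|=O(\log|\{x_i\}|)$.
   Context: For a partition $\{x_i\}$ of $X$, $|\{x_i\}|$ is the number of blocks, and $Adj(X)_{\{x_i\}}$ is the set of pairs $(r_j,n_j)$ with $r_j$ the distinct blocks and $n_j$ the number of blocks equal to $r_j$ (so $\sum_j n_j=|\{x_i\}|$). $CTM(s)=-\log_2 D(t,k)(s)$, where $D(t,k)(s)$ is the fraction of halting $t$-state $k$-symbol (2-dimensional) Turing machines started on an empty tape that output $s$; CTM values are assumed available (finite) for all binary matrices of size at most $d\times d$. $BDM_{\{x_i\}}(X)=\sum_{(r_j,n_j)\in Adj(X)_{\{x_i\}}}(CTM(r_j)+\log_2 n_j)$. The block Shannon entropy is $H_{\{x_i\}}(X)=-\sum_{(r_j,n_j)\in Adj(X)_{\{x_i\}}}\frac{n_j}{|\{x_i\}|}\log_2\frac{n_j}{|\{x_i\}|}$, each block $r_j$ being treated as a symbol. *)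

(* Defs.v *)
From Stdlib Require Import Reals List Arith.
Import ListNotations.
Open Scope R_scope.

Definition log2 (x : R) : R := ln x / ln 2.

(** A 2-dimensional binary matrix of size m x n is given by its entry function
    [X : nat -> nat -> bool] (only entries (i,j) with i < m, j < n matter).
    A block (sub-matrix content) is represented as the list of its rows. *)
Definition block := list (list bool).

Record rect := Rect { row0 : nat; col0 : nat; height : nat; width : nat }.

Definition covers (r : rect) (i j : nat) : bool :=
  (row0 r <=? i) && (i <? row0 r + height r)%nat &&
  (col0 r <=? j) && (j <? col0 r + width r)%nat.

Definition content (X : nat -> nat -> bool) (r : rect) : block :=
  map (fun a => map (fun b => X (row0 r + a)%nat (col0 r + b)%nat) (seq 0 (width r)))
      (seq 0 (height r)).

Definition is_block_partition (d m n : nat) (P : list rect) : Prop :=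
  (forall r, In r P ->
     (1 <= height r)%nat /\ (height r <= d)%nat /\
     (1 <= width r)%nat /\ (width r <= d)%nat /\
     (row0 r + height r <= m)%nat /\ (col0 r + width r <= n)%nat) /\
  (forall i j, (i < m)%nat -> (j < n)%nat ->
     length (filter (fun r => covers r i j) P) = 1%nat).

Definition block_eq_dec : forall a b : block, {a = b} + {a <> b} :=
  list_eq_dec (list_eq_dec Bool.bool_dec).

(** The blocks of the partition (with repetitions), |{x_i}| = length. *)
Definition blocks (X : nat -> nat -> bool) (P : list rect) : list block :=
  map (content X) P.

Definition distinct_blocks (X : nat -> nat -> bool) (P : list rect) : list block :=
  nodup block_eq_dec (blocks X P).

Definition mult (X : nat -> nat -> bool) (P : list rect) (b : block) : nat :=
  count_occ block_eq_dec (blocks X P) b.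

Definition Rsum (l : list R) : R := fold_right Rplus 0 l.

Definition BDM (CTM : block -> R) (X : nat -> nat -> bool) (P : list rect) : R :=
  Rsum (map (fun b => CTM b + log2 (INR (mult X P b))) (distinct_blocks X P)).

Definition Hblock (X : nat -> nat -> bool) (P : list rect) : R :=
  - Rsum (map (fun b => let p := INR (mult X P b) / INR (length P) in p * log2 p)
              (distinct_blocks X P)).

(* Main.v *)
Require Import Defs.
From Stdlib Require Import Reals List Arith Lra Lia.
Import ListNotations.
Open Scope R_scope.

Fixpoint lists_upto {T : Type} (A : list T) (k : nat) : list (list T) :=
  match k with
  | O => [[]]
  | S k' => [] :: flat_map (fun x => map (cons x) (lists_upto A k')) A
  end.

Lemma lists_upto_spec {T : Type} (A : list T) : forall k l,
  (length l <= k)%nat -> (forall x, In x l -> In x A) -> In l (lists_upto A k).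
Proof.
  induction k as [|k IH]; intros l Hl HA.
  - destruct l; simpl in *; [auto | lia].
  - destruct l as [|x l]; simpl; [auto|]. right.
    apply in_flat_map. exists x. split; [apply HA; simpl; auto|].
    apply in_map. apply IH; [simpl in Hl; lia|]. intros y Hy; apply HA; simpl; auto.
Qed.

Definition all_blocks (d : nat) : list block :=
  lists_upto (lists_upto [true; false] d) d.

Lemma content_in (d : nat) X r : (height r <= d)%nat -> (width r <= d)%nat ->
  In (content X r) (all_blocks d).
Proof.
  intros Hh Hw. unfold all_blocks, content. apply lists_upto_spec.
  - rewrite length_map, length_seq; auto.
  - intros row Hrow. apply in_map_iff in Hrow. destruct Hrow as [a [<- _]].
    apply lists_upto_spec.
    + rewrite length_map, length_seq; auto.
    + intros x _. destruct x; simpl; auto.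
Qed.

Lemma Rsum_abs_le (f : block -> R) (L : list block) b :
  In b L -> Rabs (f b) <= Rsum (map (fun x => Rabs (f x)) L).
Proof.
  induction L as [|a L IH]; simpl; [tauto|].
  assert (0 <= Rsum (map (fun x => Rabs (f x)) L)).
  { clear IH. induction L; simpl; [lra|]. pose proof (Rabs_pos (f a0)). lra. }
  intros [->|H']; [lra|]. specialize (IH H'). pose proof (Rabs_pos (f a)). lra.
Qed.

Lemma Rsum_bound (g : block -> R) (L : list block) B :
  (forall b, In b L -> Rabs (g b) <= B) ->
  Rabs (Rsum (map g L)) <= INR (length L) * B.
Proof.
  induction L as [|a L IH]; intros H.
  - simpl. rewrite Rabs_R0; lra.
  - change (Rabs (g a + Rsum (map g L)) <= INR (S (length L)) * B). rewrite S_INR. eapply Rle_trans; [apply Rabs_triang|].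
    assert (H1 := H a (or_introl eq_refl)).
    assert (H2 : Rabs (Rsum (map g L)) <= INR (length L) * B)
      by (apply IH; intros; apply H; simpl; auto). lra.
Qed.

Lemma Rsum_map_minus (f g : block -> R) L :
  Rsum (map f L) - - Rsum (map g L) = Rsum (map (fun b => f b + g b) L).
Proof. induction L; simpl; lra. Qed.

Lemma ln2_pos : 0 < ln 2.
Proof. rewrite <- ln_1. apply ln_increasing; lra. Qed.

Lemma log2_le x y : 0 < x -> x <= y -> log2 x <= log2 y.
Proof.
  intros Hx Hxy. unfold log2. pose proof ln2_pos.
  apply Rmult_le_compat_r; [left; apply Rinv_0_lt_compat; auto|].
  destruct Hxy as [Hl|Hl]; [left; apply ln_increasing; auto| rewrite Hl; lra].
Qed.

Lemma log2_1 : log2 1 = 0.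
Proof. unfold log2; rewrite ln_1; lra. Qed.

Lemma log2_2 : log2 2 = 1.
Proof. unfold log2. pose proof ln2_pos. field. lra. Qed.

Lemma term_bound (M c n N : R) :
  Rabs c <= M -> 1 <= n -> n <= N ->
  Rabs (c + log2 n + (n / N) * log2 (n / N)) <= M + 2 * log2 N.
Proof.
  intros Hc Hn HN.
  assert (L1 : 0 <= log2 n) by (rewrite <- log2_1; apply log2_le; lra).
  assert (L2 : log2 n <= log2 N) by (apply log2_le; lra).
  assert (Hp : log2 (n / N) = log2 n - log2 N).
  { unfold log2, Rdiv. rewrite ln_mult, ln_Rinv; try lra. apply Rinv_0_lt_compat; lra. }
  assert (P1 : 0 < n / N) by (apply Rdiv_lt_0_compat; lra).
  assert (P2 : n / N <= 1).
  { apply (Rmult_le_reg_r N); [lra|]. unfold Rdiv. rewrite Rmult_assoc, Rinv_l by lra. lra. }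
  rewrite Hp.
  assert (T1 : (n / N) * (log2 n - log2 N) <= 0).
  { assert (0 <= log2 N - log2 n) by lra. assert (0 <= (n/N) * (log2 N - log2 n)) by (apply Rmult_le_pos; lra). lra. }
  assert (T2 : - log2 N <= (n / N) * (log2 n - log2 N)).
  { assert (0 <= (1 - n/N) * (log2 N - log2 n)) by (apply Rmult_le_pos; lra). lra. }
  apply Rabs_le. unfold Rabs in Hc; destruct (Rcase_abs c); lra.
Qed.

Theorem proposition2 (d : nat) (hd : (1 <= d)%nat) (CTM : block -> R) :
  exists (c : R) (N0 : nat),
    forall (m n : nat) (X : nat -> nat -> bool) (P : list rect),
      is_block_partition d m n P ->
      (N0 <= length P)%nat ->
      Rabs (BDM CTM X P - Hblock X P) <= c * log2 (INR (length P)).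
Proof.
  set (M := Rsum (map (fun x => Rabs (CTM x)) (all_blocks d))).
  set (K := INR (length (all_blocks d))).
  assert (HM : 0 <= M).
  { unfold M. clear. induction (all_blocks d); simpl; [lra|].
    pose proof (Rabs_pos (CTM a)). lra. }
  assert (HK : 0 <= K) by apply pos_INR.
  exists (K * (M + 2)), 2%nat.
  intros m n X P [Hr _] HN.
  set (N := INR (length P)).
  assert (HN2 : 2 <= N) by (unfold N; change 2 with (INR 2); apply le_INR; auto).
  assert (HL : 1 <= log2 N) by (rewrite <- log2_2; apply log2_le; lra).
  unfold BDM, Hblock. rewrite Rsum_map_minus.
  set (L := distinct_blocks X P).
  assert (Hin : forall b, In b L -> In b (all_blocks d) /\ In b (blocks X P)).
  { intros b Hb. unfold L, distinct_blocks in Hb. apply nodup_In in Hb.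
    split; auto. unfold blocks in Hb. apply in_map_iff in Hb.
    destruct Hb as [r [<- Hr']]. destruct (Hr r Hr') as [_ [? [_ [? _]]]].
    apply content_in; auto. }
  assert (HLK : INR (length L) <= K).
  { apply le_INR. apply NoDup_incl_length; [apply NoDup_nodup|].
    intros b Hb; apply Hin; auto. }
  eapply Rle_trans.
  { apply (Rsum_bound _ L (M + 2 * log2 N)).
    intros b Hb. destruct (Hin b Hb) as [Ha Hbl].
    apply term_bound.
    - apply Rsum_abs_le; auto.
    - change 1 with (INR 1). apply le_INR. unfold mult.
      apply (count_occ_In block_eq_dec) in Hbl. lia.
    - unfold N, mult. apply le_INR.
      replace (length P) with (length (blocks X P)) by (unfold blocks; apply length_map).
      apply count_occ_bound. }
  assert (0 <= M + 2 * log2 N) by lra.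
  apply Rle_trans with (K * (M + 2 * log2 N)).
  { apply Rmult_le_compat_r; auto. }
  assert (M + 2 * log2 N <= (M + 2) * log2 N) by nra.
  rewrite Rmult_assoc. apply Rmult_le_compat_l; auto.
Qed.
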